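(* Let $\mathcal{A}\in\mathbb{C}^{I_{1\ldots N}\times I_{1\ldots N}}$ satisfy $W(\mathcal{A})=W(\mathcal{A}^H)$, and let $\mathcal{M}=\mathcal{N}=\beta\mathcal{I}\in\mathbb{C}^{I_{1\ldots N}\times I_{1\ldots N}}$ be Hermitian positive definite tensors ($\beta$ a scalar, $\mathcal{I}$ the identity tensor). Then $W(\mathcal{A})\cap\mu^2W(\mathcal{A}^{\dagger}_{\mathcal{M},\mathcal{N}})\neq\emptyset$ for every $(\mathcal{M},\mathcal{N})$ singular value $\mu$ of $\mathcal{A}$.
   Context: Write $I_{1\ldots N}$ for $I_1\times\cdots\times I_N$. Einstein product: $(\mathcal{A}*_N\mathcal{B})_{i_1\ldots i_Nj_1\ldots j_L}=\sum_{k_1,\ldots,k_N}a_{i_1\ldots i_Nk_1\ldots k_N}b_{k_1\ldots k_Nj_1\ldots j_L}$ (also when $\mathcal{B}\in\mathbb{C}^{I_{1\ldots N}}$). $\mathcal{A}^H$ is the conjugate transpose; the identity tensor $\mathcal{I}$ has entry 1 where the two index blocks coincide, 0 elsewhere. $\langle\mathcal{X},\mathcal{Y}\rangle=\mathcal{Y}^H*_N\mathcal{X}$, $\|\mathcal{X}\|=\langle\mathcal{X},\mathcal{X}\rangle^{1/2}$. A tensor $\mathcal{M}$ is Hermitian positive definite if $\mathcal{M}^H=\mathcal{M}$ and $\langle\mathcal{M}*_N\mathcal{X},\mathcal{X}\rangle>0$ for nonzero $\mathcal{X}$. Numerical range: $W(\mathcal{A})=\{\langle\mathcal{A}*_N\mathcal{X},\mathcal{X}\rangle:\|\mathcal{X}\|=1\}$;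 $\mu^2W=\{\mu^2z:z\in W\}$. Weighted Moore-Penrose inverse $\mathcal{A}^{\dagger}_{\mathcal{M},\mathcal{N}}$: the unique $\mathcal{X}$ with $\mathcal{A}*_N\mathcal{X}*_N\mathcal{A}=\mathcal{A}$, $\mathcal{X}*_N\mathcal{A}*_N\mathcal{X}=\mathcal{X}$, $(\mathcal{M}*_N\mathcal{A}*_N\mathcal{X})^H=\mathcal{M}*_N\mathcal{A}*_N\mathcal{X}$, $(\mathcal{N}*_N\mathcal{X}*_N\mathcal{A})^H=\mathcal{N}*_N\mathcal{X}*_N\mathcal{A}$. $(\mathcal{M},\mathcal{N})$ singular values: writing $\mathcal{A}=\mathcal{U}*_N\mathcal{S}*_N\mathcal{V}^H$ with $\mathcal{U}^H*_N\mathcal{M}*_N\mathcal{U}=\mathcal{I}$, $\mathcal{V}^H*_N\mathcal{N}^{-1}*_N\mathcal{V}=\mathcal{I}$ and $\mathcal{S}$ a real tensor whose only nonzero entries are positive numbers at positions with equal linear indices $I=J\le r$ ($r$ the rank of the reshaped $(I_1\cdots I_N)\times(I_1\cdots I_N)$ matrix of $\mathcal{A}$), these positive numbers are the $(\mathcal{M},\mathcal{N})$ singular values; equivalently, the nonzero singular values of $\mathcal{M}^{1/2}*_N\mathcal{A}*_N\mathcal{N}^{-1/2}$. *)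

(* Defs.v *)
From HB Require Import structures.
From mathcomp Require Import all_boot all_order all_algebra.
From mathcomp Require Import reals.
From mathcomp Require Import complex.
Set Implicit Arguments. Unset Strict Implicit. Unset Printing Implicit Defensive.
Import Order.TTheory GRing.Theory Num.Theory.
Local Open Scope ring_scope.

Section Tensors.
Variable C : numClosedFieldType.
Variable n : nat.
Variable I : 'I_n -> nat.

Definition mindex := {dffun forall k : 'I_n, 'I_(I k)}.

Definition tensor := mindex -> mindex -> C.
Definition vtensor := mindex -> C.

Definition tmul (A B : tensor) : tensor :=
  fun i j => \sum_(k : mindex) A i k * B k j.
Definition tapp (A : tensor) (X : vtensor) : vtensor :=
  fun i => \sum_(k : mindex) A i k * X k.
Definition tH (A : tensor) : tensor := fun i j => (A j i)^*.
Definition tI : tensor := fun i j => (i == j)%:R.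
Definition tscale (b : C) (A : tensor) : tensor := fun i j => b * A i j.
Definition tinner (X Y : vtensor) : C := \sum_(i : mindex) (Y i)^* * X i.
Definition tnorm (X : vtensor) : C := sqrtC (tinner X X).

Definition numrange (A : tensor) : C -> Prop :=
  fun z => exists X : vtensor, tnorm X = 1 /\ z = tinner (tapp A X) X.

Definition hpd (M : tensor) : Prop :=
  tH M = M /\ forall X : vtensor, X <> (fun _ => 0) -> 0 < tinner (tapp M X) X.

Definition is_wmp_inv (M Nt A X : tensor) : Prop :=
  [/\ tmul (tmul A X) A = A, tmul (tmul X A) X = X,
      tH (tmul M (tmul A X)) = tmul M (tmul A X)
    & tH (tmul Nt (tmul X A)) = tmul Nt (tmul X A)].

Definition is_MN_singval (M Nt A : tensor) (mu : C) : Prop :=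
  exists (U V S Ninv : tensor),
    tmul Nt Ninv = tI /\ tmul Ninv Nt = tI /\
    tmul (tH U) (tmul M U) = tI /\
    tmul (tH V) (tmul Ninv V) = tI /\
    A = tmul U (tmul S (tH V)) /\
    (forall i j, i != j -> S i j = 0) /\
    (forall i, 0 <= S i i) /\
    (exists i, S i i = mu /\ 0 < mu).

End Tensors.

(* Main.v *)
Require Import Defs.
From HB Require Import structures.
From mathcomp Require Import all_boot all_order all_algebra.
From mathcomp Require Import reals.
From mathcomp Require Import complex.
From Stdlib Require Import FunctionalExtensionality.
Import Order.TTheory GRing.Theory Num.Theory.
Local Open Scope ring_scope.
Set Implicit Arguments. Unset Strict Implicit.
Require Import Defs.

Section H.
Variables (C : numClosedFieldType) (n : nat) (I : 'I_n -> nat).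
Local Notation T := (tensor C I).
Local Notation VT := (vtensor C I).
Local Notation MI := (mindex I).
Implicit Types (A B D : T) (x y : VT) (b c : C) (i : MI).

Definition vscale (c : C) (x : VT) : VT := fun k => c * x k.
Definition ev (i : MI) : VT := fun k => (k == i)%:R.
Definition tcol (B : T) (i : MI) : VT := fun k => B k i.

Lemma text (A B : T) : (forall i j, A i j = B i j) -> A = B.
Proof. by move=> h; do 2 (apply: functional_extensionality => ?); apply: h. Qed.

Lemma sum_delta (F : MI -> C) i : \sum_l F l * (l == i)%:R = F i.
Proof.
rewrite (bigD1 i) //= eqxx mulr1 big1 ?addr0 // => l /negbTE ->; by rewrite mulr0.
Qed.

Lemma sum_delta' (F : MI -> C) i : \sum_l (i == l)%:R * F l = F i.
Proof.
rewrite (bigD1 i) //= eqxx mul1r big1 ?addr0 // => l; rewrite eq_sym => /negbTE ->; by rewrite mul0r.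
Qed.

Lemma tapp_ev B i : tapp B (ev i) = tcol B i.
Proof. by apply: functional_extensionality => k; rewrite /tapp /ev sum_delta. Qed.

Lemma tapp_col A B i : tapp A (tcol B i) = tcol (tmul A B) i.
Proof. by []. Qed.

Lemma tapp_scale A c x : tapp A (vscale c x) = vscale c (tapp A x).
Proof.
apply: functional_extensionality => k; rewrite /tapp /vscale mulr_sumr.
by apply: eq_bigr => l _; rewrite mulrCA.
Qed.

Lemma vscaleA b c x : vscale b (vscale c x) = vscale (b * c) x.
Proof. by apply: functional_extensionality => k; rewrite /vscale mulrA. Qed.

Lemma vscale1 x : vscale 1 x = x.
Proof. by apply: functional_extensionality => k; rewrite /vscale mul1r. Qed.

Lemma tapp_mul A B x : tapp (tmul A B) x = tapp A (tapp B x).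
Proof.
apply: functional_extensionality => k; rewrite /tapp /tmul.
under eq_bigr do rewrite mulr_suml.
rewrite exchange_big; apply: eq_bigr => l _; rewrite mulr_sumr.
by apply: eq_bigr => m _; rewrite mulrA.
Qed.

Lemma tinner_adj A x y : tinner (tapp A x) y = tinner x (tapp (tH A) y).
Proof.
rewrite /tinner /tapp /tH.
under eq_bigr do rewrite mulr_sumr.
rewrite exchange_big; apply: eq_bigr => l _.
rewrite rmorph_sum mulr_suml; apply: eq_bigr => k _.
by rewrite rmorphM /= conjCK mulrA [_ * A k l]mulrC.
Qed.

Lemma tinner_scalel c x y : tinner (vscale c x) y = c * tinner x y.
Proof. rewrite /tinner /vscale mulr_sumr; apply: eq_bigr => k _; by rewrite mulrCA. Qed.

Lemma tinner_scaler c x y : tinner x (vscale c y) = c^* * tinner x y.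
Proof. rewrite /tinner /vscale mulr_sumr; apply: eq_bigr => k _; by rewrite rmorphM mulrA. Qed.

Lemma tinner_ge0 x : 0 <= tinner x x.
Proof. apply: sumr_ge0 => k _; by rewrite mulrC mul_conjC_ge0. Qed.

Lemma tmulA (A B D : T) : tmul (tmul A B) D = tmul A (tmul B D).
Proof.
apply: text => i j; rewrite /tmul.
under eq_bigr do rewrite mulr_suml.
rewrite exchange_big; apply: eq_bigr => l _; rewrite mulr_sumr.
by apply: eq_bigr => m _; rewrite mulrA.
Qed.

Lemma tHK (A : T) : tH (tH A) = A.
Proof. by apply: text => i j; rewrite /tH conjCK. Qed.

Lemma tH_mul (A B : T) : tH (tmul A B) = tmul (tH B) (tH A).
Proof.
apply: text => i j; rewrite /tH /tmul rmorph_sum; apply: eq_bigr => k _.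
by rewrite rmorphM mulrC.
Qed.

Lemma tmul_scaleI b (B : T) : tmul (tscale b (@tI C n I)) B = tscale b B.
Proof.
apply: text => i j; rewrite /tmul /tscale /tI.
under eq_bigr do rewrite -mulrA; by rewrite -mulr_sumr sum_delta'.
Qed.

Lemma tmul_scaler b (A B : T) : tmul A (tscale b B) = tscale b (tmul A B).
Proof.
apply: text => i j; rewrite /tmul /tscale mulr_sumr; apply: eq_bigr => k _; by rewrite mulrCA.
Qed.

Lemma tH_scale b (A : T) : tH (tscale b A) = tscale b^* (tH A).
Proof. by apply: text => i j; rewrite /tH /tscale rmorphM. Qed.

Lemma tscaleA b c (A : T) : tscale b (tscale c A) = tscale (b * c) A.
Proof. by apply: text => i j; rewrite /tscale mulrA. Qed.

Lemma tscale1 (A : T) : tscale 1 A = A.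
Proof. by apply: text => i j; rewrite /tscale mul1r. Qed.

Lemma tscale_inj b (A B : T) : b != 0 -> tscale b A = tscale b B -> A = B.
Proof.
move=> hb h; apply: text => i j.
have := congr1 (fun f : T => f i j) h; rewrite /tscale => /mulfI; exact.
Qed.

End H.
Arguments ev {C n I} i.

Unset Implicit Arguments. Set Strict Implicit.
From mathcomp Require Import ring.
Theorem theorem6p10 (R : realType) (n : nat) (I : 'I_n -> nat)
    (A M Nt : tensor R[i] I) (beta : R[i]) :
  (forall z, numrange A z <-> numrange (tH A) z) ->
  M = tscale beta (@tI R[i] n I) -> Nt = tscale beta (@tI R[i] n I) ->
  hpd M -> hpd Nt ->
  forall (Adag : tensor R[i] I), is_wmp_inv M Nt A Adag ->
  forall mu : R[i], is_MN_singval M Nt A mu ->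
  exists z : R[i], numrange A z /\
    exists w : R[i], numrange Adag w /\ z = mu ^+ 2 * w.
Proof.
move=> hW -> -> _ _ X [hAXA hXAX hAX hXA] mu
  [U [V [S [Ninv [hN1 [hN2 [hU [hV [hA [hSd [hS0 [i [hSi hmu]]]]]]]]]]]]].
set TI := @tI R[i] n I in hU hV hN1 hN2 hAX hXA *.
rewrite tmul_scaleI tmul_scaler in hU.
set y := tcol U i.
set x := tcol V i.
have hUii : beta * tinner y y = 1.
  have := congr1 (fun f => f i i) hU; rewrite /tscale /TI /tI eqxx /= => h.
  exact: h.
have ny0 := tinner_ge0 y.
have b0 : beta != 0 by apply/eqP => b0; move: hUii; rewrite b0 mul0r => /eqP; rewrite eq_sym oner_eq0.
have ny0' : tinner y y != 0 by apply/eqP => b1; move: hUii; rewrite b1 mulr0 => /eqP; rewrite eq_sym oner_eq0.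
have hb : beta = (tinner y y)^-1 by apply: (mulIf ny0'); rewrite hUii mulVf.
have bge0 : 0 <= beta by rewrite hb invr_ge0.
have bgt0 : 0 < beta by rewrite lt_def b0.
have breal : beta^* = beta by apply: conj_Creal; apply: ger0_real.
have muge0 : 0 <= mu by apply: ltW.
have mureal : mu^* = mu by apply: conj_Creal; apply: ger0_real.
have mu0 : mu != 0 by rewrite gt_eqF.
have hUU : tmul (tH U) U = tscale beta^-1 TI.
  by apply: (tscale_inj b0); rewrite hU tscaleA mulfV // tscale1.
rewrite tmul_scaleI in hN1.
have hNinv : Ninv = tscale beta^-1 TI.
  by apply: (tscale_inj b0); rewrite hN1 tscaleA mulfV // tscale1.
rewrite hNinv tmul_scaleI tmul_scaler in hV.
have hVV : tmul (tH V) V = tscale beta TI.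
  apply: (tscale_inj (invr_neq0 b0)); rewrite hV tscaleA mulVf // tscale1 //.
rewrite !tmul_scaleI tH_scale breal in hAX.
rewrite !tmul_scaleI tH_scale breal in hXA.
have {}hAX := tscale_inj b0 hAX.
have {}hXA := tscale_inj b0 hXA.
have hScol : tcol S i = vscale mu (ev i).
  apply: functional_extensionality => k; rewrite /tcol /vscale /ev.
  case: (eqVneq k i) => [->|ki]; first by rewrite hSi mulr1.
  by rewrite hSd // mulr0.
have hSHcol : tcol (tH S) i = vscale mu (ev i).
  apply: functional_extensionality => k; rewrite /tcol /vscale /ev /tH.
  case: (eqVneq k i) => [->|ki]; first by rewrite hSi mureal mulr1.
  by rewrite hSd 1?eq_sym // rmorph0 mulr0.
have hAx : tapp A x = vscale (beta * mu) y.
  rewrite hA !tapp_mul.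
  have -> : tapp (tH V) x = vscale beta (ev i) by rewrite /x tapp_col hVV.
  by rewrite tapp_scale (tapp_ev S i) hScol !tapp_scale (tapp_ev U i) vscaleA.
have hAH : tH A = tmul V (tmul (tH S) (tH U)) by rewrite hA !tH_mul tHK tmulA.
have hAHy : tapp (tH A) y = vscale (beta^-1 * mu) x.
  rewrite hAH !tapp_mul.
  have -> : tapp (tH U) y = vscale beta^-1 (ev i) by rewrite /y tapp_col hUU.
  by rewrite tapp_scale (tapp_ev (tH S) i) hSHcol !tapp_scale (tapp_ev V i) vscaleA.
have key : tmul (tmul X A) (tH A) = tH A.
  by rewrite -{1}hXA -tH_mul -tmulA hAXA.
have hXy : tapp X y = vscale (beta^-1 * mu^-1) x.
  have e1 : tapp X (tapp A (tapp (tH A) y)) = tapp (tH A) y by rewrite -!tapp_mul key.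
  rewrite hAHy tapp_scale hAx vscaleA tapp_scale in e1.
  have nz : beta^-1 * mu * (beta * mu) != 0 by rewrite !mulf_neq0 ?invr_neq0.
  have -> : tapp X y = vscale (beta^-1 * mu * (beta * mu))^-1
       (vscale (beta^-1 * mu * (beta * mu)) (tapp X y)) by rewrite vscaleA mulVf ?vscale1.
  rewrite e1 vscaleA; congr vscale; field.
  by rewrite b0 mu0.
set a := sqrtC beta.
have a0 : 0 < a by rewrite sqrtC_gt0.
have areal : a^* = a by apply: conj_Creal; apply: ger0_real; apply: ltW.
have aa : a * a = beta by rewrite -expr2 sqrtCK.
have anz : a != 0 by rewrite gt_eqF.
have hyy : tinner y y = beta^-1 by rewrite hb invrK.
have hxx : tinner x x = beta.
  have := congr1 (fun f => f i i) hVV; rewrite /tscale /TI /tI eqxx /= mulr1 => h; exact: h.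
set v := vscale a^-1 x.
set u := vscale a y.
exists (tinner (tapp (tH A) v) v); split.
  apply/hW; exists v; split => //.
  rewrite /tnorm /v tinner_scalel tinner_scaler hxx fmorphV /= areal -aa.
  have -> : a^-1 * (a^-1 * (a * a)) = 1 by field.
  by rewrite sqrtC1.
exists (tinner (tapp X u) u); split.
  exists u; split => //.
  rewrite /tnorm /u tinner_scalel tinner_scaler hyy /= areal -aa.
  have -> : a * (a * (a * a)^-1) = 1 by field.
  by rewrite sqrtC1.
rewrite tinner_adj tHK /v tapp_scale hAx vscaleA /u tapp_scale hXy vscaleA.
rewrite !tinner_scalel !tinner_scaler !rmorphM !fmorphV /= areal breal mureal -aa.
field.
by rewrite anz mu0.
Qed.
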